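(* In the setting of the two-habitat-type persistence criterion ($m_1=M>1$, $m_2=\dots=m_K=m<1$, $p=\sum_{j\ge2}d_{1j}>0$, assumptions (A1), (A2), (A4)), if $$\mathbb E(S)<\frac{M-1}{Mp(1-m)},$$ then, starting from one individual in patch $1$, the population persists with positive probability.
   Context: Model: $K\ge2$ patches with stochastic dispersal matrix $D=(d_{ij})$; each individual in patch $i$ independently produces offspring distributed as $N_i$ with mean $m_i$, each offspring independently moves from $i$ to $j$ with probability $d_{ij}$. The random disperser $(X_n)$ is the Markov chain with transition matrix $D$, started at $X_0=1$; $\sigma:=\inf\{n\ge0:X_n\ne1\}$ and $S:=\inf\{n\ge0:X_{\sigma+n}=1\}$ (time spent in sinks before next visit to patch 1). Assumptions: (A1) $\mathbb P(N_1=1)<1$; (A2) $\mathbb E N_i<\infty$; (A4) $D$ irreducible. *)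

(* Defs.v *)
(* Patches are indexed 0..K-1; index 0 is
   "patch 1" of the paper, indices 1..K-1 are the sinks. *)
From Stdlib Require Import Reals Arith.
Open Scope R_scope.

Definition rsum (K : nat) (f : nat -> R) : R := sum_f_R0 f (Nat.pred K).

Fixpoint Dpow (K : nat) (D : nat -> nat -> R) (n : nat) (i j : nat) : R :=
  match n with
  | O => if Nat.eqb i j then 1 else 0
  | S n' => rsum K (fun k => Dpow K D n' i k * D k j)
  end.

Definition stochastic (K : nat) (D : nat -> nat -> R) : Prop :=
  (forall i j, (i < K)%nat -> (j < K)%nat -> 0 <= D i j) /\
  (forall i, (i < K)%nat -> rsum K (D i) = 1).

Definition irreducible (K : nat) (D : nat -> nat -> R) : Prop :=
  forall i j, (i < K)%nat -> (j < K)%nat -> exists n, 0 < Dpow K D n i j.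

Definition offspring_law (pk : nat -> R) : Prop :=
  (forall k, 0 <= pk k) /\ infinite_sum pk 1.

Definition has_mean (pk : nat -> R) (mu : R) : Prop :=
  infinite_sum (fun k => INR k * pk k) mu.

Definition exit_prob (K : nat) (D : nat -> nat -> R) : R :=
  rsum K (fun j => if Nat.eqb j 0 then 0 else D 0%nat j).

(* hit n j = P_j(T = n) where T = inf{n >= 0 : X_n = patch 1} *)
Fixpoint hit (K : nat) (D : nat -> nat -> R) (n j : nat) : R :=
  match n with
  | O => if Nat.eqb j 0 then 1 else 0
  | S n' => if Nat.eqb j 0 then 0 else rsum K (fun k => D j k * hit K D n' k)
  end.

(* P(S = n) for the random disperser started at patch 1:
   X_sigma has law d_{1j}/p on the sinks, and S is the hitting time of
   patch 1 from X_sigma. *)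
Definition law_S (K : nat) (D : nat -> nat -> R) (n : nat) : R :=
  rsum K (fun j => if Nat.eqb j 0 then 0
                   else D 0%nat j / exit_prob K D * hit K D n j).

(* q n i = P(Z_n = 0 | one individual in patch i at time 0), characterised
   by the first-generation decomposition (branching property):
   q 0 i = 0,  q (n+1) i = E[ (sum_j d_ij q n j)^{N_i} ]. *)
Definition extinction_by (K : nat) (D : nat -> nat -> R)
    (pl : nat -> nat -> R) (q : nat -> nat -> R) : Prop :=
  (forall j, (j < K)%nat -> q 0%nat j = 0) /\
  (forall n i, (i < K)%nat ->
     infinite_sum (fun k => pl i k * (rsum K (fun j => D i j * q n j)) ^ k)
                  (q (S n) i)).

Definition persists_pos_prob (K : nat) (D : nat -> nat -> R)
    (pl : nat -> nat -> R) : Prop :=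
  forall (q : nat -> nat -> R) (ql : R),
    extinction_by K D pl q -> Un_cv (fun n => q n 0%nat) ql -> ql < 1.

(* Main.v *)
Require Import Defs.
From Stdlib Require Import Reals Arith Lia Lra Psatz ClassicalEpsilon.
Open Scope R_scope.

Lemma lim_le (u v : nat -> R) a b :
  Un_cv u a -> Un_cv v b -> (exists N, forall n, (n >= N)%nat -> u n <= v n) -> a <= b.
Proof.
  intros Hu Hv [N HN].
  destruct (Rle_or_lt a b) as [|Hab]; [auto|].
  exfalso. set (e := (a - b)/2).
  assert (He : e > 0) by (unfold e; lra).
  destruct (Hu e He) as [N1 H1]. destruct (Hv e He) as [N2 H2].
  set (n := (N + N1 + N2)%nat).
  specialize (H1 n ltac:(unfold n; lia)). specialize (H2 n ltac:(unfold n; lia)).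
  specialize (HN n ltac:(unfold n; lia)).
  unfold R_dist in *. apply Rabs_def2 in H1. apply Rabs_def2 in H2. unfold e in *. lra.
Qed.

Lemma cv_const c : Un_cv (fun _ => c) c.
Proof. intros e He. exists 0%nat. intros n _. unfold R_dist. rewrite Rminus_diag, Rabs_R0. lra. Qed.

Lemma sum_mono (f : nat -> R) n k : (forall i, 0 <= f i) -> sum_f_R0 f n <= sum_f_R0 f (n + k).
Proof.
  intros Hf. induction k. rewrite Nat.add_0_r; lra.
  rewrite Nat.add_succ_r. simpl. specialize (Hf (S (n+k))). lra.
Qed.

Lemma partial_le_lim (f : nat -> R) l n :
  (forall i, 0 <= f i) -> infinite_sum f l -> sum_f_R0 f n <= l.
Proof.
  intros Hf Hl. apply (lim_le (fun _ => sum_f_R0 f n) (sum_f_R0 f)).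
  apply cv_const. exact Hl. exists n. intros n' Hn'.
  replace n' with (n + (n' - n))%nat by lia. apply sum_mono; auto.
Qed.

Lemma lim_nonneg (f : nat -> R) l : (forall i, 0 <= f i) -> infinite_sum f l -> 0 <= l.
Proof.
  intros Hf Hl. apply Rle_trans with (sum_f_R0 f 0). simpl; auto.
  apply partial_le_lim; auto.
Qed.

Lemma sum_swap (f : nat -> nat -> R) A N :
  sum_f_R0 (fun n => sum_f_R0 (fun k => f n k) A) N =
  sum_f_R0 (fun k => sum_f_R0 (fun n => f n k) N) A.
Proof.
  induction N; simpl. reflexivity.
  rewrite IHN, <- plus_sum. apply sum_eq. intros; simpl; reflexivity.
Qed.

Lemma cv_sum_finite (u : nat -> nat -> R) (l : nat -> R) A :
  (forall k, (k <= A)%nat -> Un_cv (fun n => u n k) (l k)) ->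
  Un_cv (fun n => sum_f_R0 (u n) A) (sum_f_R0 l A).
Proof.
  induction A; intros H; simpl.
  apply H; lia.
  apply CV_plus. apply IHA. intros; apply H; lia. apply H; lia.
Qed.

Lemma term_le_sum (f : nat -> R) A k :
  (forall i, (i <= A)%nat -> 0 <= f i) -> (k <= A)%nat -> f k <= sum_f_R0 f A.
Proof.
  induction A; intros Hf Hk; simpl.
  replace k with 0%nat by lia. lra.
  destruct (Nat.eq_dec k (S A)) as [->|Hne].
  assert (0 <= sum_f_R0 f A).
  { clear IHA Hk. induction A; simpl. apply Hf; lia.
    assert (0 <= f (S A)) by (apply Hf; lia). assert (0 <= sum_f_R0 f A) by (apply IHA; intros; apply Hf; lia). lra. }
  lra.
  assert (f k <= sum_f_R0 f A) by (apply IHA; [intros; apply Hf; lia| lia]).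
  assert (0 <= f (S A)) by (apply Hf; lia). lra.
Qed.

Lemma sum_nonneg_fin (f : nat -> R) A :
  (forall i, (i <= A)%nat -> 0 <= f i) -> 0 <= sum_f_R0 f A.
Proof.
  intros Hf. apply Rle_trans with (f 0%nat). apply Hf; lia. apply term_le_sum; auto; lia.
Qed.

Lemma sum_le_fin (f g : nat -> R) A :
  (forall i, (i <= A)%nat -> f i <= g i) -> sum_f_R0 f A <= sum_f_R0 g A.
Proof. apply sum_Rle. Qed.

Lemma sum_pos_exists (f : nat -> R) A :
  0 < sum_f_R0 f A -> exists k, (k <= A)%nat /\ 0 < f k.
Proof.
  induction A; simpl; intros H.
  exists 0%nat; split; auto.
  destruct (Rlt_le_dec 0 (f (S A))) as [Hp|Hn].
  exists (S A); split; auto.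
  destruct IHA as [k [Hk Hk']]. lra. exists k; split; auto.
Qed.

Lemma sum_zero_terms (f : nat -> R) A k :
  (forall i, (i <= A)%nat -> 0 <= f i) -> sum_f_R0 f A = 0 -> (k <= A)%nat -> f k = 0.
Proof.
  intros Hf Hs Hk. pose proof (term_le_sum f A k Hf Hk). pose proof (Hf k Hk). lra.
Qed.

Lemma fin_argmin (r : nat -> R) A :
  exists j, (j <= A)%nat /\ forall k, (k <= A)%nat -> r j <= r k.
Proof.
  induction A.
  exists 0%nat. split; auto. intros k Hk. replace k with 0%nat by lia. lra.
  destruct IHA as [j [Hj Hjm]].
  destruct (Rle_lt_dec (r j) (r (S A))).
  exists j. split. lia. intros k Hk. destruct (Nat.eq_dec k (S A)) as [->|]; auto. apply Hjm; lia.
  exists (S A). split; auto. intros k Hk. destruct (Nat.eq_dec k (S A)) as [->|]. lra.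
  specialize (Hjm k ltac:(lia)). lra.
Qed.

Lemma fin_delta (P : nat -> R -> Prop) A :
  (forall i d d', 0 < d' <= d -> P i d -> P i d') ->
  (forall i, (i <= A)%nat -> exists d, 0 < d /\ P i d) ->
  exists d, 0 < d /\ forall i, (i <= A)%nat -> P i d.
Proof.
  intros Hmono. induction A; intros H.
  destruct (H 0%nat (le_n 0)) as [d [Hd HP]]. exists d. split; auto. intros i Hi. replace i with 0%nat by lia. auto.
  destruct IHA as [d1 [Hd1 HP1]]. intros; apply H; lia.
  destruct (H (S A) (le_n _)) as [d2 [Hd2 HP2]].
  exists (Rmin d1 d2). split. apply Rmin_pos; auto.
  intros i Hi. destruct (Nat.eq_dec i (S A)) as [->|].
  apply Hmono with d2; auto. split. apply Rmin_pos; auto. apply Rmin_r.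
  apply Hmono with d1; auto. split. apply Rmin_pos; auto. apply Rmin_l. apply HP1; lia.
Qed.

Lemma pow_le_one (x : R) (k : nat) : 0 <= x <= 1 -> x ^ k <= 1.
Proof.
  intros Hx. induction k; simpl. lra.
  assert (0 <= x ^ k) by (apply pow_le; lra). nra.
Qed.

Lemma pow_quad x k : 0 <= x <= 1 -> (1-x)^k <= 1 - INR k * x + INR k ^ 2 * x ^ 2.
Proof.
  intros Hx. induction k. simpl; lra.
  rewrite S_INR. simpl pow. simpl pow in IHk.
  pose proof (pos_INR k). 
  assert (H1 : (1-x) * (1-x)^k <= (1-x) * (1 - INR k * x + INR k * (INR k * 1) * (x * (x * 1)))).
  { apply Rmult_le_compat_l; lra. }
  assert (0 <= INR k * INR k * x * x * x) by (repeat apply Rmult_le_pos; lra).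
  nra.
Qed.

Lemma sum_zero_after (f : nat -> R) L N : (forall k, (k > L)%nat -> f k = 0) -> (N >= L)%nat ->
  sum_f_R0 f N = sum_f_R0 f L.
Proof.
  intros Hf HN. induction N. replace L with 0%nat by lia. reflexivity.
  destruct (Nat.eq_dec (S N) L) as [<-|]. reflexivity.
  simpl. rewrite IHN by lia. rewrite Hf by lia. lra.
Qed.

Lemma pgf_bound (p : nat -> R) mu c :
  (forall k, 0 <= p k) -> infinite_sum p 1 -> infinite_sum (fun k => INR k * p k) mu ->
  (c <= 0 \/ c < mu) ->
  exists d, 0 < d /\ forall x, 0 <= x <= d ->
    exists V, infinite_sum (fun k => p k * (1-x)^k) V /\ V <= 1 - c*x.
Proof.
  intros Hp Hs Hm Hc.
  assert (Hex : forall x, 0 <= x <= 1 -> exists V, infinite_sum (fun k => p k * (1-x)^k) V).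
  { intros x Hx. destruct (Rseries_CV_comp (fun k => p k * (1-x)^k) p) as [V HV].
    intros n. split. apply Rmult_le_pos; auto. apply pow_le; lra.
    rewrite <- (Rmult_1_r (p n)) at 2. apply Rmult_le_compat_l; auto. apply pow_le_one; lra.
    exists 1; exact Hs. exists V; exact HV. }
  destruct Hc as [Hc|Hc].
  - exists 1. split. lra. intros x Hx. destruct (Hex x Hx) as [V HV]. exists V. split; auto.
    assert (V <= 1).
    { apply (lim_le _ _ V 1 HV Hs). exists 0%nat. intros n _. apply sum_Rle. intros i _.
      rewrite <- (Rmult_1_r (p i)) at 2. apply Rmult_le_compat_l; auto. apply pow_le_one; lra. }
    nra.
  - destruct (Hm ((mu - c)/2) ltac:(lra)) as [L HL].
    specialize (HL L (le_n _)). unfold R_dist in HL. apply Rabs_def2 in HL.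
    set (SL := sum_f_R0 (fun k => INR k * p k) L) in HL.
    set (l2 := INR L ^ 2).
    assert (Hl2 : 0 <= l2) by (unfold l2; apply pow_le, pos_INR).
    exists (Rmin 1 ((mu - c) / (2 * (l2 + 1)))). split.
    { apply Rmin_pos. lra. apply Rdiv_lt_0_compat; lra. }
    intros x [Hx0 Hxd].
    assert (Hx1 : x <= 1) by (apply Rle_trans with (1 := Hxd); apply Rmin_l).
    assert (Hx2 : x <= (mu - c) / (2 * (l2 + 1))) by (apply Rle_trans with (1 := Hxd); apply Rmin_r).
    destruct (Hex x (conj Hx0 Hx1)) as [V HV]. exists V. split; auto.
    set (h := fun k => if (k <=? L)%nat then INR k * x - l2 * x ^ 2 else 0).
    set (B := sum_f_R0 (fun k => p k * h k) L).
    assert (HB : B = x * SL - l2 * x^2 * sum_f_R0 p L).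
    { unfold B, SL. rewrite scal_sum, scal_sum, <- minus_sum. apply sum_eq. intros i Hi.
      unfold h. rewrite (proj2 (Nat.leb_le i L) Hi). ring. }
    assert (HpL : sum_f_R0 p L <= 1) by (apply partial_le_lim; auto).
    assert (HpL0 : 0 <= sum_f_R0 p L) by (apply cond_pos_sum; auto).
    assert (HV1 : V <= 1 - B).
    { apply (lim_le _ (fun n => sum_f_R0 p n - B) V (1 - B) HV).
      apply CV_minus. exact Hs. apply cv_const.
      exists L. intros n Hn. unfold B. rewrite <- (sum_zero_after (fun k => p k * h k) L n).
      rewrite <- minus_sum. apply sum_Rle. intros i _.
      unfold h. destruct (i <=? L)%nat eqn:E.
      - apply Nat.leb_le in E. pose proof (pow_quad x i (conj Hx0 Hx1)).
        assert (INR i ^ 2 <= l2). { unfold l2. apply pow_incr. split. apply pos_INR. apply le_INR; auto. }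
        assert (0 <= x^2) by (apply pow_le; lra).
        assert ((1-x)^i <= 1 - (INR i * x - l2 * x^2)) by nra.
        specialize (Hp i). nra.
      - specialize (Hp i). assert ((1-x)^i <= 1) by (apply pow_le_one; lra). nra.
      - intros k Hk. unfold h. rewrite (proj2 (Nat.leb_gt k L) Hk). ring.
      - exact Hn. }
    assert (Hq : l2 * x <= (mu - c)/2).
    { apply Rmult_le_compat_l with (r := l2) in Hx2; auto.
      apply Rle_trans with (1 := Hx2). unfold Rdiv. 
      rewrite Rinv_mult. 
      assert (0 < / (l2+1)) by (apply Rinv_0_lt_compat; lra).
      assert (l2 * / (l2+1) <= 1).
      { apply Rmult_le_reg_r with (l2 + 1). lra. rewrite Rmult_assoc, Rinv_l by lra. lra. }
      assert (0 <= (mu - c) * / 2) by lra.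
      replace (l2 * ((mu - c) * (/ 2 * / (l2 + 1)))) with ((mu - c) * / 2 * (l2 * / (l2+1))) by ring.
      nra. }
    rewrite HB in HV1.
    assert (x * SL >= x * ((mu + c)/2)) by (apply Rmult_ge_compat_l; lra).
    assert (l2 * x^2 * sum_f_R0 p L <= l2 * x ^2).
    { assert (0 <= l2 * x^2) by (apply Rmult_le_pos; auto; apply pow_le; lra).
      rewrite <- (Rmult_1_r (l2 * x^2)) at 2. apply Rmult_le_compat_l; auto. }
    assert (l2 * x^2 <= x * ((mu - c)/2)).
    { replace (l2 * x^2) with (x * (l2 * x)) by ring. apply Rmult_le_compat_l; auto. }
    lra.
Qed.

Lemma sum_shift (f : nat -> R) N : sum_f_R0 f (S N) = f 0%nat + sum_f_R0 (fun n => f (S n)) N.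
Proof. induction N. simpl; ring. rewrite tech5, IHN. simpl. ring. Qed.

Lemma rsum_le K (f g : nat -> R) : (1 <= K)%nat -> (forall i, (i < K)%nat -> f i <= g i) -> rsum K f <= rsum K g.
Proof. intros HK H. unfold rsum. apply sum_Rle. intros; apply H; lia. Qed.

Lemma hit_nonneg K D n j : (1 <= K)%nat -> stochastic K D -> (j < K)%nat -> 0 <= hit K D n j.
Proof.
  intros HK [HD _]. revert j. induction n; intros j Hj; simpl.
  destruct (Nat.eqb j 0); lra.
  destruct (Nat.eqb j 0). lra. unfold rsum. apply sum_nonneg_fin. intros i Hi.
  apply Rmult_le_pos. apply HD; lia. apply IHn; lia.
Qed.

Definition W K D c N j := sum_f_R0 (fun n => c ^ n * hit K D n j) N.

Lemma W_zero K D c N : W K D c N 0 = 1.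
Proof.
  unfold W. induction N. simpl. ring. simpl. rewrite IHN. simpl. ring.
Qed.

Lemma W_step K D c N j : (0 < j)%nat ->
  W K D c (S N) j = c * rsum K (fun k => D j k * W K D c N k).
Proof.
  intros Hj. unfold W. rewrite sum_shift. simpl hit.
  destruct (Nat.eqb j 0) eqn:E. apply Nat.eqb_eq in E; lia.
  unfold rsum. rewrite scal_sum.
  transitivity (sum_f_R0 (fun n => sum_f_R0 (fun k => c * c ^ n * D j k * hit K D n k) (pred K)) N).
  - rewrite Rmult_0_r, Rplus_0_l. apply sum_eq. intros i _. simpl pow.
    rewrite scal_sum. apply sum_eq. intros. ring.
  - rewrite sum_swap. apply sum_eq. intros k _.
    match goal with |- _ = ?a * ?s * ?b => replace (a*s*b) with ((a*b)*s) by ring end.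
    rewrite scal_sum. apply sum_eq. intros. ring.
Qed.

Lemma W_bounds K D c N j : (1 <= K)%nat -> stochastic K D -> 0 <= c <= 1 -> (j < K)%nat ->
  0 <= W K D c N j <= 1.
Proof.
  intros HK HS Hc. pose proof HS as [HD HR]. revert j. induction N; intros j Hj.
  - unfold W. simpl. destruct (Nat.eqb j 0); lra.
  - destruct j. rewrite W_zero; lra.
    rewrite W_step by lia.
    assert (0 <= rsum K (fun k => D (S j) k * W K D c N k) <= 1).
    { split. unfold rsum. apply sum_nonneg_fin. intros i Hi. apply Rmult_le_pos. apply HD; lia. apply IHN; lia.
      rewrite <- (HR (S j) Hj). apply rsum_le; auto. intros i Hi.
      rewrite <- (Rmult_1_r (D (S j) i)) at 2. apply Rmult_le_compat_l. apply HD; lia. apply IHN; lia. }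
    split. apply Rmult_le_pos; lra. nra.
Qed.

Lemma W_mono K D c N j : (1 <= K)%nat -> stochastic K D -> 0 <= c -> (j < K)%nat ->
  W K D c N j <= W K D c (S N) j.
Proof.
  intros HK HS Hc Hj. unfold W. rewrite tech5. assert (0 <= c ^ S N * hit K D (S N) j).
  apply Rmult_le_pos. apply pow_le; lra. apply hit_nonneg; auto. lra.
Qed.

Lemma law_S_sum K D c N :
  sum_f_R0 (fun n => c ^ n * law_S K D n) N =
  rsum K (fun j => if Nat.eqb j 0 then 0 else D 0%nat j / exit_prob K D * W K D c N j).
Proof.
  unfold law_S, rsum, W.
  transitivity (sum_f_R0 (fun n => sum_f_R0 (fun j => if Nat.eqb j 0 then 0 else D 0%nat j / exit_prob K D * (c ^ n * hit K D n j)) (pred K)) N).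
  apply sum_eq. intros n _. rewrite scal_sum. apply sum_eq. intros j _. destruct (Nat.eqb j 0); ring.
  rewrite sum_swap. apply sum_eq. intros j _. destruct (Nat.eqb j 0).
  clear. induction N; simpl; lra.
  rewrite scal_sum. apply sum_eq. intros; ring.
Qed.

Lemma law_S_nonneg K D n : (1 <= K)%nat -> stochastic K D -> 0 < exit_prob K D -> 0 <= law_S K D n.
Proof.
  intros HK HS Hp. unfold law_S, rsum. apply sum_nonneg_fin. intros j Hj.
  destruct (Nat.eqb j 0). lra. apply Rmult_le_pos. apply Rmult_le_pos. apply (proj1 HS); lia.
  left; apply Rinv_0_lt_compat; auto. apply hit_nonneg; auto; lia.
Qed.

Lemma cv_shift (u : nat -> R) l : Un_cv u l -> Un_cv (fun n => u (S n)) l.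
Proof. intros H e He. destruct (H e He) as [N HN]. exists N. intros n Hn. apply HN. lia. Qed.

Definition rlim K D j := epsilon (inhabits 0) (fun l => Un_cv (fun N => W K D 1 N j) l).

Lemma rlim_spec K D j : (1 <= K)%nat -> stochastic K D -> (j < K)%nat ->
  Un_cv (fun N => W K D 1 N j) (rlim K D j).
Proof.
  intros HK HS Hj. unfold rlim. apply epsilon_spec.
  destruct (growing_cv (fun N => W K D 1 N j)) as [l Hl].
  intros n. apply W_mono; auto; lra.
  exists 1. intros x [n ->]. apply W_bounds; auto; lra.
  exists l; exact Hl.
Qed.

Lemma rlim_bounds K D j : (1 <= K)%nat -> stochastic K D -> (j < K)%nat -> 0 <= rlim K D j <= 1.
Proof.
  intros HK HS Hj. pose proof (rlim_spec K D j HK HS Hj) as H. split.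
  apply (lim_le (fun _ => 0) _ 0 _ (cv_const 0) H). exists 0%nat. intros. apply W_bounds; auto; lra.
  apply (lim_le _ (fun _ => 1) _ 1 H (cv_const 1)). exists 0%nat. intros. apply W_bounds; auto; lra.
Qed.

Lemma rlim_zero K D : (1 <= K)%nat -> stochastic K D -> rlim K D 0 = 1.
Proof.
  intros HK HS. apply (UL_sequence (fun N => W K D 1 N 0)). apply rlim_spec; auto; lia.
  intros e He. exists 0%nat. intros n _. rewrite W_zero. unfold R_dist. rewrite Rminus_diag, Rabs_R0; lra.
Qed.

Lemma rlim_harm K D j : (1 <= K)%nat -> stochastic K D -> (0 < j < K)%nat ->
  rlim K D j = rsum K (fun k => D j k * rlim K D k).
Proof.
  intros HK HS Hj. apply (UL_sequence (fun N => W K D 1 (S N) j)).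
  apply cv_shift, rlim_spec; auto; lia.
  apply (Un_cv_ext (fun N => rsum K (fun k => D j k * W K D 1 N k))).
  intros n. rewrite W_step by lia. ring.
  unfold rsum. apply cv_sum_finite. intros k Hk.
  apply (CV_mult (fun _ => D j k)). apply cv_const. apply rlim_spec; auto; lia.
Qed.

Lemma rlim_one K D j : (1 <= K)%nat -> stochastic K D -> irreducible K D -> (j < K)%nat ->
  1 <= rlim K D j.
Proof.
  intros HK HS HI Hj. pose proof HS as [HD HR].
  destruct (fin_argmin (rlim K D) (pred K)) as [js [Hjs Hmin]].
  set (mn := rlim K D js) in *.
  assert (Hjs' : (js < K)%nat) by lia.
  assert (Hclaim : forall n k, (k < K)%nat -> 0 < Dpow K D n js k -> rlim K D k = mn \/ rlim K D 0 = mn).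
  { induction n; intros k Hk Hpos.
    - simpl in Hpos. destruct (Nat.eqb js k) eqn:E. apply Nat.eqb_eq in E. subst. left; reflexivity. lra.
    - simpl in Hpos. unfold rsum in Hpos. apply sum_pos_exists in Hpos. destruct Hpos as [l [Hl Hpl]].
      assert (HDl : 0 <= D l k) by (apply HD; lia).
      assert (HDl' : 0 < D l k /\ 0 < Dpow K D n js l).
      { destruct HDl as [HDl|HDl]. split; auto.
        destruct (Rle_lt_dec (Dpow K D n js l) 0); auto. nra. rewrite <- HDl in Hpl. lra. }
      destruct HDl' as [HDl1 HDl2].
      destruct (IHn l ltac:(lia) HDl2) as [Hrl|Hr0]; [|right; auto].
      destruct l as [|l]. right; auto. left.
      pose proof (rlim_harm K D (S l) HK HS ltac:(lia)) as Hh.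
      assert (Hz : sum_f_R0 (fun k' => D (S l) k' * (rlim K D k' - mn)) (pred K) = 0).
      { transitivity (rsum K (fun k' => D (S l) k' * rlim K D k') - mn * rsum K (D (S l))).
        unfold rsum. rewrite scal_sum, <- minus_sum. apply sum_eq. intros; ring.
        rewrite <- Hh, HR by lia. rewrite Hrl. ring. }
      assert (Hk0 : D (S l) k * (rlim K D k - mn) = 0).
      { apply (sum_zero_terms (fun k' => D (S l) k' * (rlim K D k' - mn)) (pred K) k); auto; [|lia].
        intros i Hi. apply Rmult_le_pos. apply HD; lia. pose proof (Hmin i Hi); lra. }
      simpl in Hk0. apply Rmult_integral in Hk0. destruct Hk0; lra. }
  destruct (HI js 0%nat Hjs' ltac:(lia)) as [n Hn].
  assert (H0 : rlim K D 0 = mn) by (destruct (Hclaim n 0%nat ltac:(lia) Hn); auto).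
  rewrite rlim_zero in H0 by auto. rewrite H0. apply Hmin. lia.
Qed.

Lemma law_total K D : (1 <= K)%nat -> stochastic K D -> irreducible K D -> 0 < exit_prob K D ->
  exists L, 1 <= L /\ Un_cv (fun N => sum_f_R0 (fun n => 1 ^ n * law_S K D n) N) L.
Proof.
  intros HK HS HI Hp.
  exists (rsum K (fun j => if Nat.eqb j 0 then 0 else D 0%nat j / exit_prob K D * rlim K D j)).
  split.
  - apply Rle_trans with (rsum K (fun j => if Nat.eqb j 0 then 0 else D 0%nat j / exit_prob K D)).
    + right. transitivity (/ exit_prob K D * exit_prob K D). field. lra.
      unfold exit_prob at 2, rsum. rewrite scal_sum. apply sum_eq. intros i _. destruct (Nat.eqb i 0); unfold Rdiv; ring.
    + apply rsum_le; auto. intros i Hi. destruct (Nat.eqb i 0). lra.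
      rewrite <- (Rmult_1_r (D 0%nat i / exit_prob K D)) at 1. apply Rmult_le_compat_l.
      unfold Rdiv. apply Rmult_le_pos. apply (proj1 HS); lia. left; apply Rinv_0_lt_compat; auto.
      apply rlim_one; auto.
  - apply (Un_cv_ext (fun N => rsum K (fun j => if Nat.eqb j 0 then 0 else D 0%nat j / exit_prob K D * W K D 1 N j))).
    intros n. rewrite law_S_sum. reflexivity.
    unfold rsum. apply cv_sum_finite. intros k Hk. destruct (Nat.eqb k 0). apply cv_const.
    apply (CV_mult (fun _ => _)). apply cv_const. apply rlim_spec; auto; lia.
Qed.

Lemma bern c n : 0 <= c <= 1 -> 1 - INR n * (1 - c) <= c ^ n.
Proof.
  intros Hc. induction n. simpl; lra.
  rewrite S_INR. simpl pow. assert (c ^ n <= 1) by (apply pow_le_one; lra). nra.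
Qed.

Lemma pow1_sum f N : sum_f_R0 (fun n => 1 ^ n * f n) N = sum_f_R0 f N.
Proof. apply sum_eq. intros. rewrite pow1. ring. Qed.

Theorem mainTheorem3 (K : nat) (D : nat -> nat -> R) (pl : nat -> nat -> R)
    (M m ES : R) :
  (2 <= K)%nat ->
  stochastic K D ->
  irreducible K D ->
  (forall i, (i < K)%nat -> offspring_law (pl i)) ->
  pl 0%nat 1%nat < 1 ->
  has_mean (pl 0%nat) M ->
  (forall i, (1 <= i < K)%nat -> has_mean (pl i) m) ->
  1 < M -> m < 1 ->
  0 < exit_prob K D ->
  infinite_sum (fun n => INR n * law_S K D n) ES ->
  ES < (M - 1) / (M * exit_prob K D * (1 - m)) ->
  persists_pos_prob K D pl.
Proof.
  intros HK2 HS HI Hlaw _ HM0 HMs HM1 Hm1 Hp HES Hcond q ql Hq Hcv.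
  assert (HK : (1 <= K)%nat) by lia.
  pose proof HS as [HD HR].
  set (p := exit_prob K D) in *.
  assert (Hm0 : 0 <= m).
  { apply (lim_nonneg (fun k => INR k * pl 1%nat k)). intros k. apply Rmult_le_pos. apply pos_INR.
    apply (proj1 (Hlaw 1%nat ltac:(lia))). apply HMs; lia. }
  assert (HES0 : 0 <= ES).
  { apply (lim_nonneg (fun n => INR n * law_S K D n)); auto. intros n. apply Rmult_le_pos. apply pos_INR.
    apply law_S_nonneg; auto. }
  set (X := 1 - p * (1 - m) * ES).
  assert (HMX : M * X > 1).
  { assert (Hd : 0 < M * p * (1 - m)) by (apply Rmult_lt_0_compat; [apply Rmult_lt_0_compat|]; lra).
    assert (ES * (M * p * (1 - m)) < M - 1).
    { apply Rmult_lt_compat_r with (r := M * p * (1 - m)) in Hcond; auto.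
      replace ((M - 1) / (M * p * (1 - m)) * (M * p * (1 - m))) with (M - 1) in Hcond by (field; lra). lra. }
    unfold X. nra. }
  assert (HX1 : X <= 1) by (unfold X; assert (0 <= p * (1 - m) * ES) by (apply Rmult_le_pos; [apply Rmult_le_pos|]; lra); lra).
  assert (HX0 : 0 < X) by nra.
  set (dl := (M * X - 1) / (2 * M)).
  assert (Hdl : 0 < dl) by (unfold dl; apply Rdiv_lt_0_compat; lra).
  assert (HMXd : M * (X - dl) > 1) by (unfold dl; field_simplify; [|lra]; apply Rlt_gt; apply Rmult_lt_reg_r with 2; [lra|]; field_simplify; lra).
  assert (HXd : 0 < X - dl) by nra.
  assert (Hdl1 : dl <= 1) by (unfold dl; apply Rmult_le_reg_r with (2 * M); [lra|]; field_simplify; nra).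
  set (c0 := / (X - dl)).
  assert (Hc0M : c0 < M).
  { unfold c0. apply Rmult_lt_reg_r with (X - dl); auto. rewrite Rinv_l by lra. lra. }
  assert (Hc0 : 0 < c0) by (unfold c0; apply Rinv_0_lt_compat; lra).
  set (s := dl / (2 * (p * m * ES + 1))).
  assert (Hpm : 0 <= p * m * ES) by (apply Rmult_le_pos; [apply Rmult_le_pos|]; lra).
  assert (Hs0 : 0 < s) by (unfold s; apply Rdiv_lt_0_compat; lra).
  assert (Hs1 : s <= 1).
  { unfold s. apply Rmult_le_reg_r with (2 * (p * m * ES + 1)). lra.
    field_simplify; lra. }
  assert (Hps : p * m * s * ES <= dl / 2).
  { unfold s. apply Rmult_le_reg_r with (2 * (p * m * ES + 1)). lra.
    field_simplify; [|lra]. nra. }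
  set (c := m * (1 - s)).
  assert (Hc : 0 <= c <= 1) by (unfold c; split; nra).
  assert (Hcm : c <= 0 \/ c < m).
  { destruct Hm0 as [Hm0|Hm0]. right; unfold c; nra. left; unfold c; rewrite <- Hm0; lra. }
  set (eta := dl / (2 * p)).
  assert (Heta : 0 < eta) by (unfold eta; apply Rdiv_lt_0_compat; lra).
  destruct (law_total K D HK HS HI Hp) as [L [HL1 HLcv]].
  destruct (HLcv eta Heta) as [N HN]. specialize (HN N (le_n _)).
  unfold R_dist in HN. apply Rabs_def2 in HN. rewrite pow1_sum in HN.
  set (w := W K D c N).
  set (y := fun i => rsum K (fun k => D i k * w k)).
  assert (Hw : forall j, (j < K)%nat -> 0 <= w j <= 1) by (intros; apply W_bounds; auto).
  assert (Hw0 : w 0%nat = 1) by apply W_zero.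
  assert (Hy : forall i, (i < K)%nat -> 0 <= y i <= 1).
  { intros i Hi. unfold y. split. unfold rsum. apply sum_nonneg_fin. intros k Hk.
    apply Rmult_le_pos. apply HD; lia. apply Hw; lia.
    rewrite <- (HR i Hi). apply rsum_le; auto. intros k Hk. 
    rewrite <- (Rmult_1_r (D i k)) at 2. apply Rmult_le_compat_l. apply HD; lia. apply Hw; lia. }
  assert (Hsink : forall i, (0 < i < K)%nat -> w i <= c * y i).
  { intros i Hi. unfold y, w. rewrite <- W_step by lia. apply W_mono; auto; try lra; lia. }
  assert (Hy0 : y 0%nat = 1 - p + p * sum_f_R0 (fun n => c ^ n * law_S K D n) N).
  { unfold y. rewrite law_S_sum. fold w.
    transitivity (sum_f_R0 (fun k => D 0%nat k) (pred K)
      - sum_f_R0 (fun k => if Nat.eqb k 0 then 0 else D 0%nat k) (pred K)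
      + p * sum_f_R0 (fun j => if Nat.eqb j 0 then 0 else D 0%nat j / p * w j) (pred K)).
    - unfold rsum. rewrite scal_sum, <- minus_sum, <- plus_sum.
      apply sum_eq. intros k _. destruct (Nat.eqb k 0) eqn:E.
      apply Nat.eqb_eq in E. subst. rewrite Hw0. ring. field. lra.
    - change (sum_f_R0 (fun k => D 0%nat k) (pred K)) with (rsum K (D 0%nat)). rewrite (HR 0%nat ltac:(lia)). reflexivity. }
  assert (Hlow : sum_f_R0 (fun n => c ^ n * law_S K D n) N >= sum_f_R0 (law_S K D) N - (1 - c) * ES).
  { assert (H1 : sum_f_R0 (fun n => INR n * law_S K D n) N <= ES).
    { apply partial_le_lim; auto. intros n. apply Rmult_le_pos. apply pos_INR. apply law_S_nonneg; auto. }
    assert (H2 : sum_f_R0 (fun n => law_S K D n - (1 - c) * (INR n * law_S K D n)) N <= sum_f_R0 (fun n => c ^ n * law_S K D n) N).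
    { apply sum_Rle. intros n _. pose proof (bern c n Hc). pose proof (law_S_nonneg K D n HK HS Hp). nra. }
    rewrite minus_sum in H2.
    assert (H3 : sum_f_R0 (fun n => (1 - c) * (INR n * law_S K D n)) N = (1 - c) * sum_f_R0 (fun n => INR n * law_S K D n) N).
    { rewrite scal_sum. apply sum_eq. intros; ring. }
    rewrite H3 in H2. assert (0 <= 1 - c) by lra. nra. }
  assert (Hy0c : c0 * y 0%nat >= 1).
  { assert (y 0%nat >= X - dl).
    { rewrite Hy0. unfold X. unfold eta in HN.
      assert (Hpe : p * (dl / (2 * p)) = dl / 2) by (field; lra).
      set (Sc := sum_f_R0 (fun n => c ^ n * law_S K D n) N) in *.
      set (S1 := sum_f_R0 (law_S K D) N) in *.
      assert (Sc >= 1 - dl / (2 * p) - (1 - c) * ES) by lra.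
      assert (p * Sc >= p * (1 - dl / (2 * p) - (1 - c) * ES)) by (apply Rmult_ge_compat_l; lra).
      assert (p * (1 - dl / (2 * p) - (1 - c) * ES) = p - dl/2 - p * (1 - m) * ES - p * m * s * ES) by (unfold c; field; lra).
      lra. }
    unfold c0. apply Rle_ge. apply Rmult_le_reg_l with (X - dl); auto.
    rewrite <- Rmult_assoc, Rinv_r by lra. lra. }
  set (ci := fun i => if Nat.eqb i 0 then c0 else c).
  destruct (fin_delta (fun i d => forall x, 0 <= x <= d -> exists V,
      infinite_sum (fun k => pl i k * (1 - x) ^ k) V /\ V <= 1 - ci i * x) (pred K)) as [dd [Hdd HP]].
  { intros i d d' Hd' H x Hx. apply H. lra. }
  { intros i Hi. destruct (Hlaw i ltac:(lia)) as [Hpl1 Hpl2].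
    destruct i as [|i].
    - apply pgf_bound with (mu := M); auto; simpl; right; auto.
    - apply pgf_bound with (mu := m); auto; try (apply HMs; lia); simpl; exact Hcm. }
  set (eps := Rmin dd 1).
  assert (Heps : 0 < eps <= 1) by (unfold eps; split; [apply Rmin_pos; lra| apply Rmin_r]).
  assert (Hepsd : eps <= dd) by apply Rmin_l.
  assert (Hinv : forall n j, (j < K)%nat -> 0 <= q n j <= 1 - eps * w j).
  { destruct Hq as [Hq0 Hqs]. induction n; intros j Hj.
    - rewrite Hq0 by auto. pose proof (Hw j Hj). split. lra. nra.
    - set (sv := rsum K (fun k => D j k * q n k)).
      assert (Hsv : 0 <= sv <= 1 - eps * y j).
      { split. unfold sv, rsum. apply sum_nonneg_fin. intros k Hk. apply Rmult_le_pos. apply HD; lia. apply IHn; lia.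
        replace (1 - eps * y j) with (rsum K (fun k => D j k * (1 - eps * w k))).
        apply rsum_le; auto. intros k Hk. apply Rmult_le_compat_l. apply HD; lia. apply IHn; lia.
        transitivity (rsum K (D j) - eps * y j).
        unfold y, rsum. rewrite scal_sum, <- minus_sum. apply sum_eq. intros; ring.
        rewrite (HR j Hj). reflexivity. }
      pose proof (Hy j Hj) as Hyj.
      destruct (HP j ltac:(lia) (eps * y j) ltac:(split; nra)) as [V [HV HVb]].
      pose proof (Hqs n j Hj) as Hqn. fold sv in Hqn.
      destruct (Hlaw j Hj) as [Hpl1 _].
      split.
      + apply (lim_nonneg _ _ (fun k => Rmult_le_pos _ _ (Hpl1 k) (pow_le _ k (proj1 Hsv))) Hqn).
      + apply Rle_trans with V.
        apply (lim_le _ _ _ _ Hqn HV). exists 0%nat. intros n' _. apply sum_Rle. intros k _.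
        apply Rmult_le_compat_l; auto. apply pow_incr. lra.
        apply Rle_trans with (1 := HVb). unfold ci. destruct (Nat.eqb j 0) eqn:E.
        * apply Nat.eqb_eq in E. subst. rewrite Hw0. nra.
        * apply Nat.eqb_neq in E. pose proof (Hsink j ltac:(lia)). nra. }
  assert (ql <= 1 - eps).
  { apply (lim_le _ (fun _ => 1 - eps) _ _ Hcv (cv_const _)). exists 0%nat. intros n _.
    replace (1 - eps) with (1 - eps * w 0%nat) by (rewrite Hw0; ring).
    apply Hinv; lia. }
  lra.
Qed.
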